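(* For all $r \in \mathbb{R}^3 \setminus \{0\}$ and all $f_* \in \mathbb{R}^3$, $$f\big(r, c_1(r,f_* ), c_2(r,f_* )\big) = f_*,$$ where $f$, $c_1$, $c_2$ are the functions defined in the context below.
   Context: Notation: $\|\cdot\|$ is the Euclidean norm. For $a=(a_1,a_2,a_3)^{\mathrm T}\in\mathbb{R}^3$, $[a]_\times$ is the skew-symmetric matrix with rows $(0,-a_3,a_2)$, $(a_3,0,-a_1)$, $(-a_2,a_1,0)$, so $[a]_\times b = a\times b$. $\operatorname{sgn}:\mathbb{R}\to\{-1,0,1\}$ is the sign function with $\operatorname{sgn}(0)=0$. Force function: for $r\in\mathbb{R}^3\setminus\{0\}$ and $p,q\in\mathbb{R}^3$, $$f(r,p,q) \triangleq \frac{q^{\mathrm T} r}{\|r\|}\,p + \frac{p^{\mathrm T} r}{\|r\|}\,q + \frac{p^{\mathrm T} q}{\|r\|}\,r - 5\,\frac{(p^{\mathrm T} r)(q^{\mathrm T} r)}{\|r\|^3}\,r.$$ Rotation-like matrix: $R(r,f_* )\in\mathbb{R}^{3\times 3}$ is defined as follows. If $[r]_\times f_*\neq 0$, then $R(r,f_* )$ is the matrix whose three rows are (the transposes of) the column vectors $$\frac{r}{\|r\|},\qquad \frac{(r^{\mathrm T} r) f_* - (r^{\mathrm T} f_* )\, r}{\|r\|\,\|[r]_\times f_*\|},\qquad \frac{[r]_\times f_*}{\|[r]_\times f_*\|};$$ if $[r]_\times f_* = 0$, then $R(r,f_* )$ is the matrix whose first row is $r^{\mathrm T}/\|r\|$ and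 whose second and third rows are zero. Auxiliary scalars: $$\Phi_1(r,f_* ) \triangleq \sqrt{\|[r]_\times f_*\|^2 + \|r\|^2\|f_*\|^2},\qquad \Phi_2(r,f_* ) \triangleq \big(2-\operatorname{sgn}(r^{\mathrm T} f_* )^2\big)\,\Phi_1(r,f_* ),$$ $$a_x \triangleq -\frac{\operatorname{sgn}(r^{\mathrm T} f_* )}{2}\Big(\frac{|r^{\mathrm T} f_*| + \Phi_1}{\|r\|}\Big)^{1/2},\qquad a_y \triangleq \frac{1}{\sqrt2}\Big(\frac{-|r^{\mathrm T} f_*| + \Phi_2}{\|r\|}\Big)^{1/2},$$ $$b_x \triangleq \frac{1}{2}\Big(\frac{|r^{\mathrm T} f_*| + \Phi_2}{\|r\|}\Big)^{1/2},\qquad b_y \triangleq -\frac{\operatorname{sgn}(r^{\mathrm T} f_* )}{\sqrt2}\Big(\frac{-|r^{\mathrm T} f_*| + \Phi_1}{\|r\|}\Big)^{1/2},$$ all evaluated at $(r,f_* )$. Let $a(r,f_* ) \triangleq (a_x, a_y, 0)^{\mathrm T}$ and $b(r,f_* ) \triangleq (b_x,b_y,0)^{\mathrm T}$. Finally $$c_1(r,f_* ) \triangleq R(r,f_* )^{\mathrm T} a(r,f_* ),\qquad c_2(r,f_* ) \triangleq R(r,f_* )^{\mathrm T} b(r,f_* ).$$ *)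

(* Defs.v *)
From HB Require Import structures.
From mathcomp Require Import all_boot all_order all_algebra.
From mathcomp Require Import reals.
Set Implicit Arguments. Unset Strict Implicit. Unset Printing Implicit Defensive.
Import Order.TTheory GRing.Theory Num.Theory.
Local Open Scope ring_scope.

Section Defs.
Variable R : realType.
Implicit Types (a b p q r fs : 'cV[R]_3).

Definition comp a (k : nat) : R := a (@inord 2 k) 0.

Definition dot p q : R := (p^T *m q) 0 0.
Definition vnorm a : R := Num.sqrt (dot a a).

(* [a]_x : rows (0,-a3,a2), (a3,0,-a1), (-a2,a1,0) *)
Definition skew a : 'M[R]_3 :=
  \matrix_(i < 3, j < 3)
    (if (i : nat) == 0%N then
       (if (j : nat) == 0%N then 0 else if (j : nat) == 1%N then - comp a 2 else comp a 1)
     else if (i : nat) == 1%N then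
       (if (j : nat) == 0%N then comp a 2 else if (j : nat) == 1%N then 0 else - comp a 0)
     else
       (if (j : nat) == 0%N then - comp a 1 else if (j : nat) == 1%N then comp a 0 else 0)).

Definition force r p q : 'cV[R]_3 :=
  (dot q r / vnorm r) *: p + (dot p r / vnorm r) *: q + (dot p q / vnorm r) *: r
  - (5 * (dot p r * dot q r) / vnorm r ^+ 3) *: r.

Definition rows3 (u v w : 'cV[R]_3) : 'M[R]_3 :=
  \matrix_(i < 3, j < 3)
    (if (i : nat) == 0%N then u j 0 else if (i : nat) == 1%N then v j 0 else w j 0).

Definition Rmat r fs : 'M[R]_3 :=
  let c := skew r *m fs in
  if c != 0 then
    rows3 ((vnorm r)^-1 *: r)
          ((vnorm r * vnorm c)^-1 *: (dot r r *: fs - dot r fs *: r))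
          ((vnorm c)^-1 *: c)
  else rows3 ((vnorm r)^-1 *: r) 0 0.

Definition Phi1 r fs : R :=
  Num.sqrt (vnorm (skew r *m fs) ^+ 2 + vnorm r ^+ 2 * vnorm fs ^+ 2).
Definition Phi2 r fs : R := (2 - Num.sg (dot r fs) ^+ 2) * Phi1 r fs.

(* x^(1/2) is Num.sqrt x (all arguments below are nonnegative) *)
Definition a_x r fs : R :=
  - (Num.sg (dot r fs) / 2) * Num.sqrt ((`|dot r fs| + Phi1 r fs) / vnorm r).
Definition a_y r fs : R :=
  (Num.sqrt 2)^-1 * Num.sqrt ((- `|dot r fs| + Phi2 r fs) / vnorm r).
Definition b_x r fs : R :=
  2^-1 * Num.sqrt ((`|dot r fs| + Phi2 r fs) / vnorm r).
Definition b_y r fs : R :=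
  - (Num.sg (dot r fs) / Num.sqrt 2) * Num.sqrt ((- `|dot r fs| + Phi1 r fs) / vnorm r).

Definition vec3 (x y z : R) : 'cV[R]_3 :=
  \col_(i < 3) (if (i : nat) == 0%N then x else if (i : nat) == 1%N then y else z).

Definition avec r fs : 'cV[R]_3 := vec3 (a_x r fs) (a_y r fs) 0.
Definition bvec r fs : 'cV[R]_3 := vec3 (b_x r fs) (b_y r fs) 0.

Definition c1 r fs : 'cV[R]_3 := (Rmat r fs)^T *m avec r fs.
Definition c2 r fs : 'cV[R]_3 := (Rmat r fs)^T *m bvec r fs.

End Defs.

(* Main.v *)
Require Import Defs.
From HB Require Import structures.
From mathcomp Require Import all_boot all_order all_algebra.
From mathcomp Require Import reals ring lra.
Import Order.TTheory GRing.Theory Num.Theory.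
Local Open Scope ring_scope.
Set Implicit Arguments. Unset Strict Implicit.
Section S.
Variable R : realType.
Implicit Types (p q r u v w fs : 'cV[R]_3).

Lemma l1 : lift ord0 ord0 = 1 :> 'I_3. Proof. by apply/val_inj. Qed.
Lemma l2 : lift ord0 (lift ord0 ord0) = 2%:R :> 'I_3. Proof. by apply/val_inj. Qed.

Lemma ord3 (i : 'I_3) : i = 0 \/ i = 1 \/ i = 2%:R.
Proof.
case: i => [[|[|[|i]]] Hi]; [left|right;left|right;right|by []]; exact/val_inj.
Qed.

Lemma dot3 p q : dot p q = p 0 0 * q 0 0 + p 1 0 * q 1 0 + p 2%:R 0 * q 2%:R 0.
Proof. by rewrite /dot !mxE !big_ord_recl big_ord0 !mxE l1 l2 addr0 addrA. Qed.

Lemma rows3_mul u v w x y : (rows3 u v w)^T *m vec3 x y 0 = x *: u + y *: v.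
Proof.
apply/matrixP => i j; rewrite !mxE !big_ord_recl big_ord0 !mxE /=.
rewrite (ord1 j); ring.
Qed.

Lemma comp0 (a : 'cV[R]_3) : Defs.comp a 0%N = a 0 0.
Proof. by rewrite /comp; congr (a _ _); apply/val_inj; rewrite /= inordK. Qed.
Lemma comp1 (a : 'cV[R]_3) : Defs.comp a 1%N = a 1 0.
Proof. by rewrite /comp; congr (a _ _); apply/val_inj; rewrite /= inordK. Qed.
Lemma comp2 (a : 'cV[R]_3) : Defs.comp a 2%N = a 2%:R 0.
Proof. by rewrite /comp; congr (a _ _); apply/val_inj; rewrite /= inordK. Qed.

Definition cr r (f : 'cV[R]_3) := vec3 (r 1 0 * f 2%:R 0 - r 2%:R 0 * f 1 0)
   (r 2%:R 0 * f 0 0 - r 0 0 * f 2%:R 0) (r 0 0 * f 1 0 - r 1 0 * f 0 0).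

Lemma skew_mul r (f : 'cV[R]_3) : Defs.skew r *m f = cr r f.
Proof.
apply/matrixP => i j; rewrite (ord1 j) !mxE !big_ord_recl big_ord0 !mxE /=.
rewrite !comp0 !comp1 !comp2 l1 l2.
case: i => [[|[|[|i]]] Hi] //=; ring.
Qed.

Lemma sq_eq (x y : R) : 0 <= x -> 0 <= y -> x ^+ 2 = y ^+ 2 -> x = y.
Proof. by move=> hx hy h; apply/eqP; rewrite -(eqrXn2 (n:=2)) // h. Qed.

Lemma key (s C F rho : R) : 0 < rho -> 0 <= C -> 0 <= F -> F ^+ 2 = 2 * C ^+ 2 + s ^+ 2 ->
 let P2 := (2 - Num.sg s ^+ 2) * F in
 let ax := - (Num.sg s / 2) * Num.sqrt ((`|s| + F) / rho) in
 let ay := (Num.sqrt 2)^-1 * Num.sqrt ((- `|s| + P2) / rho) in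
 let bx := 2^-1 * Num.sqrt ((`|s| + P2) / rho) in
 let by_ := - (Num.sg s / Num.sqrt 2) * Num.sqrt ((- `|s| + F) / rho) in
 [/\ ay * by_ - 2 * ax * bx = s / rho, bx * ay + ax * by_ = C / rho
   & (C = 0 -> ay * by_ = 0)].
Proof.
move=> rho0 C0 F0 hF; cbv zeta.
have s20 : 0 < Num.sqrt 2 :> R by rewrite sqrtr_gt0; lra.
have s2n : Num.sqrt 2 != 0 :> R by rewrite gt_eqF.
have hs2 : Num.sqrt 2 ^+ 2 = 2 :> R by rewrite sqr_sqrtr; lra.
have rhon : rho != 0 by rewrite gt_eqF.
have h20 : (2:R) != 0 by rewrite pnatr_eq0.
have hC2 : C ^+ 2 = (F ^+ 2 - s ^+ 2) / 2 by rewrite hF; field; rewrite ?rhon ?s2n ?h20 //.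
have sF1 : 0 <= s + F by nra.
have sF2 : 0 <= - s + F by nra.
set s2 := Num.sqrt 2 in s20 s2n hs2 *.
case: (ltrgtP 0 s) => [sp|sn|s0].
- rewrite (gtr0_sg sp) (gtr0_norm sp) expr1n.
  have -> : (2 - 1) * F = F by ring.
  set A := Num.sqrt ((s + F) / rho); set B := Num.sqrt ((- s + F) / rho).
  have hA : A ^+ 2 = (s + F) / rho by rewrite sqr_sqrtr // divr_ge0 // ltW.
  have hB : B ^+ 2 = (- s + F) / rho by rewrite sqr_sqrtr // divr_ge0 // ltW.
  have A0 : 0 <= A by apply: sqrtr_ge0.
  have B0 : 0 <= B by apply: sqrtr_ge0.
  split.
  +
    transitivity (A ^+ 2 / 2 - B ^+ 2 / s2 ^+ 2); first by field; rewrite ?rhon ?s2n ?h20 //.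
    rewrite hA hB hs2; field; rewrite ?rhon ?s2n ?h20 //.
  +
    transitivity (A * B / s2); first by field; rewrite ?rhon ?s2n ?h20 //.
    apply: sq_eq.
    * by apply: divr_ge0; [apply: mulr_ge0|apply: ltW].
    * by apply: divr_ge0; [|apply: ltW].
    rewrite !expr_div_n exprMn hA hB hs2 hC2; field; rewrite ?rhon ?s2n ?h20 //.
  + move=> hC; have FS : F = s.
      apply: sq_eq => //; first exact: ltW.
      by rewrite hF hC; ring.
    rewrite /B FS addNr mul0r sqrtr0; ring.
- rewrite (ltr0_sg sn) (ltr0_norm sn) sqrrN expr1n opprK.
  have -> : (2 - 1) * F = F by ring.
  set A := Num.sqrt ((- s + F) / rho); set B := Num.sqrt ((s + F) / rho).
  have hA : A ^+ 2 = (- s + F) / rho by rewrite sqr_sqrtr // divr_ge0 // ltW.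
  have hB : B ^+ 2 = (s + F) / rho by rewrite sqr_sqrtr // divr_ge0 // ltW.
  have A0 : 0 <= A by apply: sqrtr_ge0.
  have B0 : 0 <= B by apply: sqrtr_ge0.
  split.
  +
    transitivity (B ^+ 2 / s2 ^+ 2 - A ^+ 2 / 2); first by field; rewrite ?rhon ?s2n ?h20 //.
    rewrite hA hB hs2; field; rewrite ?rhon ?s2n ?h20 //.
  +
    transitivity (A * B / s2); first by field; rewrite ?rhon ?s2n ?h20 //.
    apply: sq_eq.
    * by apply: divr_ge0; [apply: mulr_ge0|apply: ltW].
    * by apply: divr_ge0; [|apply: ltW].
    rewrite !expr_div_n exprMn hA hB hs2 hC2; field; rewrite ?rhon ?s2n ?h20 //.
  + move=> hC; have FS : F = - s.
      apply: sq_eq => //; first by lra.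
      by rewrite hF hC; ring.
    rewrite /B FS addrN mul0r sqrtr0; ring.
- rewrite -s0 sgr0 normr0.
  have -> : - 0 + (2 - 0 ^+ 2) * F = 2 * F by ring.
  have -> : 0 + (2 - 0 ^+ 2) * F = 2 * F by ring.
  set D := Num.sqrt (2 * F / rho).
  have hD0 : 0 <= 2 * F / rho by apply: divr_ge0; [nra|lra].
  have hD : D ^+ 2 = 2 * F / rho by rewrite sqr_sqrtr.
  have FC : F = s2 * C.
    apply: sq_eq => //; first by apply: mulr_ge0 => //; apply: ltW.
    by rewrite exprMn hs2 hF -s0; ring.
  split.
  + ring.
  +
    transitivity (D ^+ 2 / (2 * s2)); first by field; rewrite ?rhon ?s2n ?h20 //.
    rewrite hD FC; field; rewrite ?rhon ?s2n ?h20 //.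
  + by move=> _; ring.
Qed.
Lemma dotC p q : dot p q = dot q p. Proof. rewrite !dot3; ring. Qed.
Lemma dotDl p q w : dot (p + q) w = dot p w + dot q w.
Proof. rewrite !dot3 !mxE; ring. Qed.
Lemma dotBl p q w : dot (p - q) w = dot p w - dot q w.
Proof. rewrite !dot3 !mxE; ring. Qed.
Lemma dotZl a p q : dot (a *: p) q = a * dot p q.
Proof. rewrite !dot3 !mxE; ring. Qed.
Lemma dotZr a p q : dot p (a *: q) = a * dot p q.
Proof. by rewrite dotC dotZl dotC. Qed.
Lemma dot_ge0 p : 0 <= dot p p.
Proof. rewrite dot3; nra. Qed.
Lemma dot_eq0 p : dot p p = 0 -> p = 0.
Proof.
rewrite dot3 => h.
have h0 : p 0 0 = 0 by nra.
have h1 : p 1 0 = 0 by nra.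
have h2 : p 2%:R 0 = 0 by nra.
apply/matrixP => i j; rewrite (ord1 j) !mxE.
case: i => [[|[|[|i]]] Hi] //=.
- by rewrite -h0; congr (p _ _); apply/val_inj.
- by rewrite -h1; congr (p _ _); apply/val_inj.
- by rewrite -h2; congr (p _ _); apply/val_inj.
Qed.
Lemma vnorm_sq p : vnorm p ^+ 2 = dot p p.
Proof. by rewrite sqr_sqrtr // dot_ge0. Qed.
Lemma lagrange r f : dot (cr r f) (cr r f) = dot r r * dot f f - dot r f ^+ 2.
Proof. rewrite !dot3 /cr !mxE /=; ring. Qed.
Lemma bac r f : dot r r *: f - dot r f *: r = cr (cr r f) r.
Proof.
apply/matrixP => i j; rewrite (ord1 j) /cr !dot3 !mxE.
by case: (ord3 i) => [->|[->|->]]; rewrite /=; ring.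
Qed.
Lemma dot0l p : dot 0 p = 0. Proof. rewrite dot3 !mxE; ring. Qed.
Lemma dotDr p q w : dot w (p + q) = dot w p + dot w q.
Proof. rewrite !dot3 !mxE; ring. Qed.
Lemma dotBr p q w : dot w (p - q) = dot w p - dot w q.
Proof. rewrite !dot3 !mxE; ring. Qed.
Lemma cr0 f : cr 0 f = 0.
Proof.
apply/matrixP => i j; rewrite (ord1 j) /cr !mxE.
by case: (ord3 i) => [->|[->|->]]; rewrite /=; ring.
Qed.
Lemma vnorm0 : vnorm (0 : 'cV[R]_3) = 0.
Proof. by rewrite /vnorm dot0l sqrtr0. Qed.
End S.

Theorem proposition2 (R : realType) (r fs : 'cV[R]_3) :
  r != 0 -> force r (c1 r fs) (c2 r fs) = fs.
Proof.
move=> r0.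
have rr0 : 0 < dot r r.
  rewrite lt_neqAle dot_ge0 andbT eq_sym; apply/eqP => /dot_eq0 h.
  by rewrite h eqxx in r0.
have rho0 : 0 < vnorm r by rewrite /vnorm sqrtr_gt0.
have rhon : vnorm r != 0 by rewrite gt_eqF.
have hrho : dot r r = vnorm r ^+ 2 by rewrite vnorm_sq.
have C0 : 0 <= vnorm (Defs.skew r *m fs) by apply: sqrtr_ge0.
have hC : vnorm (Defs.skew r *m fs) ^+ 2 = vnorm r ^+ 2 * dot fs fs - dot r fs ^+ 2.
  by rewrite vnorm_sq skew_mul lagrange hrho.
have F0 : 0 <= Phi1 r fs by apply: sqrtr_ge0.
have hF : Phi1 r fs ^+ 2 = 2 * vnorm (Defs.skew r *m fs) ^+ 2 + dot r fs ^+ 2.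
  rewrite /Phi1 sqr_sqrtr; last by apply: addr_ge0; apply: sqr_ge0 || (apply: mulr_ge0; apply: sqr_ge0).
  rewrite [vnorm fs ^+ 2]vnorm_sq hC; ring.
have [K1 K2 K3] : [/\ a_y r fs * b_y r fs - 2 * a_x r fs * b_x r fs = dot r fs / vnorm r,
   b_x r fs * a_y r fs + a_x r fs * b_y r fs = vnorm (Defs.skew r *m fs) / vnorm r
   & (vnorm (Defs.skew r *m fs) = 0 -> a_y r fs * b_y r fs = 0)].
  exact (@key R _ _ _ _ rho0 C0 F0 hF).
set s := dot r fs in hC hF K1 K2 K3 *.
set rho := vnorm r in rho0 rhon hrho hC K1 K2 K3 *.
set c := Defs.skew r *m fs in C0 hC hF K1 K2 K3 *.
set C := vnorm c in C0 hC hF K1 K2 K3 *.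
set ax := a_x r fs in K1 K2 K3 *.
set ay := a_y r fs in K1 K2 K3 *.
set bx := b_x r fs in K1 K2 K3 *.
set by_ := b_y r fs in K1 K2 K3 *.
pose v := if c != 0 then (rho * C)^-1 *: (dot r r *: fs - s *: r) else 0.
have hc1 : c1 r fs = ax *: (rho^-1 *: r) + ay *: v.
  rewrite /c1 /Rmat /= -/c -/rho -/C -/s /v /avec.
  by case: ifP => _; rewrite rows3_mul ?scaler0 ?addr0.
have hc2 : c2 r fs = bx *: (rho^-1 *: r) + by_ *: v.
  rewrite /c2 /Rmat /= -/c -/rho -/C -/s /v /bvec.
  by case: ifP => _; rewrite rows3_mul ?scaler0 ?addr0.
have Cn : c != 0 -> C != 0.
  move=> hc; apply/eqP => hC0; move: hc; rewrite (@dot_eq0 R c) ?eqxx //.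
  by rewrite -vnorm_sq -/C hC0 expr0n.
have hff : dot fs fs = (C ^+ 2 + s ^+ 2) / rho ^+ 2 by rewrite hC; field.
have dvr : dot v r = 0.
  rewrite /v; case: ifP => _; last by rewrite dot0l.
  rewrite dotZl dotBl !dotZl (dotC fs r) -/s; ring.
have dvv : ay * by_ * dot v v = ay * by_.
  rewrite /v; case: ifP => hc.
    rewrite dotZl dotZr !dotBl !dotBr !dotZl !dotZr (dotC fs r) -/s hff hrho.
    have := Cn hc => Cn'; field; rewrite ?Cn' ?rhon //.
  rewrite dot0l K3 ?mulr0 // /C.
  by move/negbFE/eqP: hc => ->; rewrite vnorm0.
have hw : rho ^+ 2 *: fs - s *: r = (rho * C) *: v.
  rewrite /v; case: ifP => hc.
    rewrite scalerA mulfV ?scale1r ?hrho // mulf_neq0 //; exact: Cn.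
  rewrite scaler0 -hrho /s bac -(skew_mul r fs) -/c.
  by move/negbFE/eqP: hc => ->; rewrite cr0.
clearbody v.
rewrite hc1 hc2 /force -/rho.
have d1 : dot (ax *: (rho^-1 *: r) + ay *: v) r = ax * rho.
  rewrite dotDl !dotZl dvr hrho; field; rewrite ?rhon //.
have d2 : dot (bx *: (rho^-1 *: r) + by_ *: v) r = bx * rho.
  rewrite dotDl !dotZl dvr hrho; field; rewrite ?rhon //.
have d3 : dot (ax *: (rho^-1 *: r) + ay *: v) (bx *: (rho^-1 *: r) + by_ *: v)
    = ax * bx + ay * by_ * dot v v.
  rewrite !dotDl !dotZl !dotDr !dotZr (dotC r v) dvr hrho; field; rewrite ?rhon //.
rewrite d1 d2 d3 dvv.
apply/matrixP => i j; rewrite !mxE.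
have hwi : rho ^+ 2 * fs i j - s * r i j = rho * C * v i j.
  by have := congr1 (fun m : 'cV[R]_3 => m i j) hw; rewrite !mxE.
transitivity ((bx * ay + ax * by_) * v i j + (ay * by_ - 2 * ax * bx) / rho * r i j).
  field; rewrite ?rhon //.
rewrite K1 K2.
have hfi : fs i j = (s * r i j + rho * C * v i j) / rho ^+ 2.
  rewrite -hwi; field; rewrite ?rhon //.
rewrite [in RHS]hfi; field; rewrite ?rhon //.
Qed.
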